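(* Let $X$ be a $\sigma$-monotonically complete Banach lattice, $E\subseteq X$ a closed subspace, and $(x_k,f_k)$ an absolute frame for $E$. Then for each $x\in E$, $\sum_{k=1}^n f_k(x)x_k\xrightarrow{o}x$ in $X$ as $n\to\infty$. In particular, for any Banach lattice $X$, each absolute frame for a closed subspace $E\subseteq X$ has expansions $\sum_{k=1}^n f_k(x)x_k$ that order converge to $x$ in $X^{**}$.
   Context: A Banach lattice is $\sigma$-monotonically complete if every increasing norm bounded sequence of positive elements has a supremum. A (Schauder) frame for a Banach space $E$ is a sequence $(x_k,f_k)\in E\times E^*$ such that $x=\sum_{k=1}^\infty f_k(x)x_k$ (norm convergence) for all $x\in E$. For $E$ a closed subspace of a Banach lattice, the frame is absolute if for each $x\in E$, $\sup_n\|\sum_{k=1}^n|f_k(x)x_k|\|<\infty$. Order convergence $y_n\xrightarrow{o}y$ means there is a net $z_\beta\downarrow0$ such that for every $\beta$ there is $n_\beta$ with $|y_n-y|\le z_\beta$ for all $n\ge n_\beta$. *)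

(* Defs.v *)
From HB Require Import structures.
From mathcomp Require Import all_boot all_order all_algebra.
From mathcomp Require Import all_classical all_reals all_analysis.
Set Implicit Arguments. Unset Strict Implicit. Unset Printing Implicit Defensive.
Import Order.TTheory GRing.Theory Num.Theory.
Import numFieldNormedType.Exports.
Local Open Scope classical_set_scope.
Local Open Scope ring_scope.

Definition is_ub {V : Type} (le : V -> V -> Prop) (A : set V) (m : V) : Prop :=
  forall a, A a -> le a m.
Definition is_lb {V : Type} (le : V -> V -> Prop) (A : set V) (m : V) : Prop :=
  forall a, A a -> le m a.

Definition is_sup {V : Type} (S : set V) (le : V -> V -> Prop) (A : set V) (m : V) : Prop :=
  S m /\ is_ub le A m /\ forall m', S m' -> is_ub le A m' -> le m m'.
Definition is_inf {V : Type} (S : set V) (le : V -> V -> Prop) (A : set V) (m : V) : Prop :=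
  S m /\ is_lb le A m /\ forall m', S m' -> is_lb le A m' -> le m' m.

Definition directed {I : Type} (leI : I -> I -> Prop) : Prop :=
  inhabited I /\ (forall a, leI a a) /\
  (forall a b c, leI a b -> leI b c -> leI a c) /\
  (forall a b, exists c, leI a c /\ leI b c).

(* In a vector lattice |a| = sup {a, -a}, so |a| <= z means exactly that z is an
   upper bound of {a, -a}, i.e. a <= z and -a <= z. *)
Definition ocvg {V : zmodType} (S : set V) (le : V -> V -> Prop)
    (y : nat -> V) (l : V) : Prop :=
  exists (I : Type) (leI : I -> I -> Prop) (z : I -> V),
    directed leI /\
    (forall b, S (z b)) /\
    (forall b b', leI b b' -> le (z b') (z b)) /\
    is_inf S le (range z) 0 /\
    forall b, exists nb : nat, forall n : nat, (nb <= n)%N ->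
      le (y n - l) (z b) /\ le (- (y n - l)) (z b).

Definition is_banach_lattice {R : realType} {X : completeNormedModType R}
    (le : X -> X -> Prop) (join : X -> X -> X) : Prop :=
  (forall x, le x x) /\
  (forall x y, le x y -> le y x -> x = y) /\
  (forall x y z, le x y -> le y z -> le x z) /\
  (forall x y z, le x y -> le (x + z) (y + z)) /\
  (forall (a : R) x y, 0 <= a -> le x y -> le (a *: x) (a *: y)) /\
  (forall x y, is_sup setT le [set x; y] (join x y)) /\
  (forall x y, le (join x (- x)) (join y (- y)) ->
      `|x| <= `|y|).

Definition labs {X : zmodType} (join : X -> X -> X) (x : X) : X := join x (- x).

Definition sigma_monotonically_complete {R : realType} {X : completeNormedModType R}
    (le : X -> X -> Prop) : Prop :=
  forall u : nat -> X,
    (forall n, le 0 (u n)) -> (forall n, le (u n) (u n.+1)) ->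
    (exists M : R, forall n, `|u n| <= M) ->
    exists s, is_sup setT le (range u) s.

Definition closed_subspace {R : realType} {X : normedModType R} (E : set X) : Prop :=
  closed E /\ E 0 /\
  (forall (a b : R) x y, E x -> E y -> E (a *: x + b *: y)).

(* f (a function on X) restricts to an element of E^*: linear and bounded on E *)
Definition in_dual_of {R : realType} {X : normedModType R} (E : set X) (f : X -> R) : Prop :=
  (forall (a b : R) x y, E x -> E y -> f (a *: x + b *: y) = a * f x + b * f y) /\
  (exists C : R, forall x, E x -> `|f x| <= C * `|x|).

(* partial sums  s_n = sum_{k=1}^n f_k(x) x_k  (indices shifted to start at 0) *)
Definition frame_psum {R : realType} {X : normedModType R}
    (xs : nat -> X) (fs : nat -> X -> R) (x : X) (n : nat) : X :=
  \sum_(k < n) (fs k x) *: xs k.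

Definition is_frame {R : realType} {X : normedModType R} (E : set X)
    (xs : nat -> X) (fs : nat -> X -> R) : Prop :=
  (forall k, E (xs k)) /\ (forall k, in_dual_of E (fs k)) /\
  (forall x, E x -> frame_psum xs fs x @ \oo --> x).

Definition is_absolute_frame {R : realType} {X : normedModType R}
    (join : X -> X -> X) (E : set X) (xs : nat -> X) (fs : nat -> X -> R) : Prop :=
  is_frame E xs fs /\
  forall x, E x -> exists M : R, forall n : nat,
    `| \sum_(k < n) labs join ((fs k x) *: xs k) | <= M.

Definition dual_set {R : realType} (X : normedModType R) : set (X -> R) :=
  in_dual_of (@setT X).

Definition dual_norm {R : realType} {X : normedModType R} (f : X -> R) : R :=
  sup [set `|f x| | x in [set x : X | `|x| <= 1]].

(* X^** : bounded linear functionals on X^* (values outside X^* irrelevant) *)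
Definition bidual_set {R : realType} (X : normedModType R) : set ((X -> R) -> R) :=
  fun phi =>
    (forall (a b : R) f g, @dual_set _ X f -> @dual_set _ X g ->
        phi (fun x => a * f x + b * g x) = a * phi f + b * phi g) /\
    (exists C : R, forall f, @dual_set _ X f -> `|phi f| <= C * dual_norm f).

Definition dual_pos {R : realType} {X : normedModType R} (le : X -> X -> Prop)
    (f : X -> R) : Prop :=
  forall x, le 0 x -> 0 <= f x.

Definition bidual_le {R : realType} {X : normedModType R} (le : X -> X -> Prop)
    (phi psi : (X -> R) -> R) : Prop :=
  forall f, @dual_set _ X f -> dual_pos le f -> phi f <= psi f.

Definition bidual_emb {R : realType} {X : normedModType R} (x : X) : (X -> R) -> R :=
  fun f => f x.

(* Main.v *)
Require Import Defs.
From HB Require Import structures.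
From mathcomp Require Import all_boot all_order all_algebra.
From mathcomp Require Import all_classical all_reals all_analysis.
From mathcomp Require Import ring lra.
Import Order.TTheory GRing.Theory Num.Theory.
Import numFieldNormedType.Exports.
Local Open Scope classical_set_scope.
Local Open Scope ring_scope.

Section Lat.
Variables (R : realType) (X : completeNormedModType R)
  (le : X -> X -> Prop) (join : X -> X -> X).
Hypothesis HB : is_banach_lattice le join.

Lemma L_refl x : le x x. Proof. by case: HB. Qed.
Lemma L_anti x y : le x y -> le y x -> x = y. Proof. by case: HB => _ [h _]; apply: h. Qed.
Lemma L_trans x y z : le x y -> le y z -> le x z. Proof. by case: HB => _ [_ [h _]]; apply: h. Qed.
Lemma L_add x y z : le x y -> le (x + z) (y + z). Proof. by case: HB => _ [_ [_ [h _]]]; apply: h. Qed.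
Arguments L_add {x y} z.
Arguments L_trans {x y z}.
Arguments L_anti {x y}.
Lemma L_scale (a : R) {x y} : 0 <= a -> le x y -> le (a *: x) (a *: y).
Proof. by case: HB => _ [_ [_ [_ [h _]]]]; apply: h. Qed.
Lemma L_sup x y : is_sup setT le [set x; y] (join x y).
Proof. by case: HB => _ [_ [_ [_ [_ [h _]]]]]; apply: h. Qed.
Lemma L_norm x y : le (join x (- x)) (join y (- y)) -> `|x| <= `|y|.
Proof. by case: HB => _ [_ [_ [_ [_ [_ h]]]]]; apply: h. Qed.

Lemma L_joinl x y : le x (join x y).
Proof. by case: (L_sup x y) => _ [+ _]; apply; left. Qed.
Lemma L_joinr x y : le y (join x y).
Proof. by case: (L_sup x y) => _ [+ _]; apply; right. Qed.
Lemma L_join_least x y z : le x z -> le y z -> le (join x y) z.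
Proof. by move=> h1 h2; case: (L_sup x y) => _ [_]; apply => // a [->|->]. Qed.

Lemma L_addl {x y} z : le x y -> le (z + x) (z + y).
Proof. by move=> h; rewrite ![z + _]addrC; apply: L_add. Qed.
Lemma L_add2 {a b c d} : le a b -> le c d -> le (a + c) (b + d).
Proof. by move=> h1 h2; apply: (L_trans (L_add c h1)); apply: (L_addl _ h2). Qed.
Lemma L_subP a b : le a b <-> le 0 (b - a).
Proof.
split => h.
  by have := L_add (- a) h; rewrite subrr.
by have := L_add a h; rewrite add0r subrK.
Qed.
Lemma L_opp {a b} : le a b -> le (- b) (- a).
Proof. by move=> /L_subP h; apply/L_subP; rewrite opprK addrC. Qed.

Lemma L_abs_ge x : le x (labs join x). Proof. exact: L_joinl. Qed.
Lemma L_abs_geN x : le (- x) (labs join x). Proof. exact: L_joinr. Qed.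
Lemma L_abs_ge0 x : le 0 (labs join x).
Proof.
have h := L_add2 (L_abs_ge x) (L_abs_geN x).
rewrite subrr in h.
have h2 : (0:R) <= 2^-1 by rewrite invr_ge0.
have := L_scale (2^-1) h2 h.
rewrite scaler0 scalerDr -scalerDl.
have -> : (2^-1 + 2^-1 : R) = 1 by field.
by rewrite scale1r.
Qed.
Lemma L_abs_id {v} : le 0 v -> labs join v = v.
Proof.
move=> h; apply: L_anti; last exact: L_abs_ge.
apply: L_join_least; first exact: L_refl.
apply: (L_trans _ h); have := L_opp h; by rewrite oppr0.
Qed.

Lemma L_sum_ge0 n (v : nat -> X) : (forall k, le 0 (v k)) -> le 0 (\sum_(k < n) v k).
Proof.
move=> h; elim: n => [|n IH]; first by rewrite big_ord0; exact: L_refl.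
by rewrite big_ord_recr /=; have := L_add2 IH (h n); rewrite addr0.
Qed.

Lemma L_closed (c : nat -> X) (l : X) : c @ \oo --> l ->
  (\forall N \near \oo, le 0 (c N)) -> le 0 l.
Proof.
move=> cv ev.
set p := join (- l) 0.
have p0 : le 0 p by exact: L_joinr.
have key : \forall N \near \oo, `|p| <= `|l - c N|.
  apply: filterS ev => N hN; apply: L_norm; rewrite -/(labs join p) (L_abs_id p0) -/(labs join (l - c N)).
  apply: L_join_least; last exact: L_abs_ge0.
  apply: (L_trans _ (L_abs_geN _)); rewrite opprB.
  have := L_add (- l) hN; by rewrite add0r.
have pz : `|p| = 0.
  apply/eqP; rewrite eq_le normr_ge0 andbT; apply/negPn/negP; rewrite -ltNge => pg.
  move/cvgrPdist_lt: cv => /(_ _ pg) ev2.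
  have [N [h1 h2]] := filter_ex (filterI key ev2).
  by move: (le_lt_trans h1 h2); rewrite ltxx.
move/eqP: pz; rewrite normr_eq0 => /eqP pz.
have : le (- l) 0 by rewrite -pz; exact: L_joinl.
by move/L_opp; rewrite opprK oppr0.
Qed.

Section Frame.
Variables (xs : nat -> X) (fs : nat -> X -> R) (x : X).
Let a k := fs k x *: xs k.
Let y := frame_psum xs fs x.
Let u n := \sum_(k < n) labs join (a k).

Lemma u_step n : u n.+1 = u n + labs join (a n).
Proof. by rewrite /u big_ord_recr. Qed.
Lemma y_step n : y n.+1 = y n + a n.
Proof. by rewrite /y /frame_psum big_ord_recr. Qed.
Lemma u_ge0 n : le 0 (u n).
Proof. by rewrite /u; apply: (L_sum_ge0 n (fun k => labs join (a k))) => k; exact: L_abs_ge0. Qed.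
Lemma u_mono {m n} : (m <= n)%N -> le (u m) (u n).
Proof.
move=> /subnKC <-; elim: (n - m)%N => [|d IH]; first by rewrite addn0; exact: L_refl.
apply: (L_trans IH); rewrite addnS u_step; have := L_addl (u (m + d)) (L_abs_ge0 (a (m + d))).
by rewrite addr0.
Qed.
Lemma y_diff {n N} : (n <= N)%N ->
  le (y n - y N) (u N - u n) /\ le (y N - y n) (u N - u n).
Proof.
move=> /subnKC <-; elim: (N - n)%N => [|d [IH1 IH2]].
  by rewrite addn0 !subrr; split; exact: L_refl.
rewrite addnS u_step y_step; split.
  rewrite opprD addrA -[u _ + _ - _]addrAC; exact: L_add2 IH1 (L_abs_geN (a (n + d))).
rewrite -[y _ + _ - _]addrAC -[u _ + _ - _]addrAC; exact: L_add2 IH2 (L_abs_ge (a (n + d))).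
Qed.

Lemma part1_main : sigma_monotonically_complete le ->
  frame_psum xs fs x @ \oo --> x ->
  (exists M : R, forall n : nat, `| \sum_(k < n) labs join ((fs k x) *: xs k) | <= M) ->
  ocvg setT le (frame_psum xs fs x) x.
Proof.
move=> Hsmc conv [M HM].
have [s [_ [sub sleast]]] := Hsmc u u_ge0 (fun n => u_mono (leqnSn n)) (ex_intro _ M HM).
exists nat, (fun a b => (a <= b)%N), (fun m => s - u m).
split.
  split; first exact: (inhabits 0%N).
  split; first exact: leqnn.
  split; first by move=> ? ? ?; exact: leq_trans.
  by move=> p q; exists (maxn p q); rewrite leq_maxl leq_maxr.
split; first by [].
split.
  by move=> b b' h; apply: L_addl; apply: L_opp; apply: u_mono.
split.
  split; first by [].
  split.
    by move=> _ [m _ <-]; apply: (L_subP (u m) s).1; apply: sub; exists m.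
  move=> m' _ hlb.
  have ub : is_ub le (range u) (s - m').
    move=> _ [k _ <-]; have := L_add (u k - m') (hlb (s - u k) (ex_intro2 _ _ k I erefl)).
    by rewrite addrC subrK addrA subrK.
  have := sleast _ I ub; move/L_subP; rewrite addrAC subrr add0r.
  by move/L_opp; rewrite oppr0 opprK.
move=> b; exists b => n bn.
have key : forall N, (n <= N)%N -> le (u N - u n) (s - u b).
  move=> N _; apply: L_add2; first by apply: sub; exists N.
  by apply: L_opp; apply: u_mono.
split.
  apply: (L_subP _ _).2.
  apply: (L_closed (fun N => (s - u b) - (y n - y N))).
    apply: cvgB; first exact: cvg_cst.
    by apply: cvgB; [exact: cvg_cst | exact: conv].
  apply: filterS (nbhs_infty_ge n) => N hN.
  by apply: (L_subP _ _).1; exact: (L_trans (y_diff hN).1 (key N hN)).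
apply: (L_subP _ _).2.
apply: (L_closed (fun N => (s - u b) - (y N - y n))).
  apply: cvgB; first exact: cvg_cst.
  rewrite opprB.
  by apply: cvgB; [exact: conv | exact: cvg_cst].
apply: filterS (nbhs_infty_ge n) => N hN.
by apply: (L_subP _ _).1; exact: (L_trans (y_diff hN).2 (key N hN)).
Qed.

Section Dual.
Variable f : X -> R.
Hypothesis df : dual_set f.
Lemma d_lin (p q : R) v w : f (p *: v + q *: w) = p * f v + q * f w.
Proof. by case: df => h _; apply: h. Qed.
Lemma d_0 : f 0 = 0.
Proof. by have := d_lin 0 0 0 0; rewrite !scale0r addr0 !mul0r addr0. Qed.
Lemma d_D v w : f (v + w) = f v + f w.
Proof. by have := d_lin 1 1 v w; rewrite !scale1r !mul1r. Qed.
Lemma d_N v : f (- v) = - f v.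
Proof. by have := d_lin (-1) 0 v 0; rewrite scale0r addr0 scaleN1r mul0r addr0 mulN1r. Qed.
Lemma d_B v w : f (v - w) = f v - f w.
Proof. by rewrite d_D d_N. Qed.
Lemma d_sum n (v : nat -> X) : f (\sum_(k < n) v k) = \sum_(k < n) f (v k).
Proof.
elim: n => [|n IH]; first by rewrite !big_ord0 d_0.
by rewrite !big_ord_recr /= d_D IH.
Qed.
Lemma d_ub : has_ubound [set `|f w| | w in [set w : X | `|w| <= 1]].
Proof.
case: df => _ [C hC]; exists (Num.max C 0) => _ [w hw <-].
apply: (le_trans (hC w I)); rewrite /= in hw.
have [C0|C0] := leP 0 C.
  by rewrite ler_piMr.
by rewrite nmulr_rle0.
Qed.
Lemma dn_ge0 : 0 <= dual_norm f.
Proof.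
apply: le_trans (ub_le_sup d_ub _); first exact: (normr_ge0 (f 0)).
by exists 0; rewrite /= ?normr0 ?ler01.
Qed.
Lemma d_bound v : `|f v| <= dual_norm f * `|v|.
Proof.
have [->|v0] := eqVneq v 0; first by rewrite d_0 !normr0 mulr0.
have nv : 0 < `|v| by rewrite normr_gt0.
have h : `|f (`|v|^-1 *: v)| <= dual_norm f.
  apply: ub_le_sup; first exact: d_ub.
  by exists (`|v|^-1 *: v) => //=; rewrite normrZ normfV normr_id mulVf// gt_eqF.
have e : f (`|v|^-1 *: v) = `|v|^-1 * f v.
  by have := d_lin (`|v|^-1) 0 v 0; rewrite scale0r addr0 mul0r addr0.
rewrite e normrM normfV normr_id in h.
by rewrite -ler_pdivrMr// mulrC.
Qed.
Hypothesis fpos : dual_pos le f.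
Lemma d_mono v w : le v w -> f v <= f w.
Proof. by move=> /L_subP /fpos; rewrite d_B subr_ge0. Qed.
End Dual.

Lemma d_cvg f (df : dual_set f) (v : nat -> X) l :
  v @ \oo --> l -> (fun N => f (v N)) @ \oo --> f l.
Proof.
move=> /cvgrPdist_lt cv; apply/cvgrPdist_lt => e e0.
have d1 : 0 < dual_norm f + 1 by rewrite ltr_wpDl ?ler01 ?(dn_ge0 _ df).
apply: filterS (cv (e / (dual_norm f + 1)) (divr_gt0 e0 d1)) => N hN.
rewrite -(d_B _ df); apply: le_lt_trans (d_bound _ df _) _.
apply: (@le_lt_trans _ _ ((dual_norm f + 1) * `|l - v N|)).
  by rewrite ler_wpM2r// lerDl ler01.
by rewrite mulrC -ltr_pdivlMr.
Qed.

Variable M : R.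
Hypothesis HM : forall n, `|u n| <= M.

Lemma fu_bound f (df : dual_set f) N :
  \sum_(k < N) `|f (labs join (a k))| <= dual_norm f * M + dual_norm f * M.
Proof.
pose b k := f (labs join (a k)).
pose c k := (0 <= b k).
pose vp := \sum_(k < N) (if c k then labs join (a k) else 0).
pose vn := \sum_(k < N) (if c k then 0 else labs join (a k)).
have uE : u N = vp + vn.
  by rewrite /u /vp /vn -big_split /=; apply: eq_bigr => k _; case: ifP => _; rewrite ?addr0 ?add0r.
have vp0 : le 0 vp.
  by rewrite /vp; apply: (L_sum_ge0 N (fun k => if c k then labs join (a k) else 0)) => j; case: (c j); [exact: L_abs_ge0 | exact: L_refl].
have vn0 : le 0 vn.
  by rewrite /vn; apply: (L_sum_ge0 N (fun k => if c k then 0 else labs join (a k))) => j; case: (c j); [exact: L_refl | exact: L_abs_ge0].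
have nvp : `|vp| <= M.
  apply: le_trans (HM N); apply: L_norm.
  rewrite -/(labs join vp) -/(labs join (u N)) (L_abs_id vp0) (L_abs_id (u_ge0 N)) uE.
  by have := L_addl vp vn0; rewrite addr0.
have nvn : `|vn| <= M.
  apply: le_trans (HM N); apply: L_norm.
  rewrite -/(labs join vn) -/(labs join (u N)) (L_abs_id vn0) (L_abs_id (u_ge0 N)) uE.
  by have := L_add vn vp0; rewrite add0r.
have sumE : \sum_(k < N) `|b k| = f vp - f vn.
  rewrite /vp /vn (d_sum _ df N (fun k => if c k then labs join (a k) else 0)) (d_sum _ df N (fun k => if c k then 0 else labs join (a k))) -sumrB; apply: eq_bigr => k _; rewrite /c.
  case: ifP => h; rewrite (d_0 _ df) ?subr0 ?sub0r//; first by rewrite ger0_norm.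
  by rewrite ltr0_norm// ltNge h.
rewrite sumE; apply: le_trans (ler_norm _) _; apply: le_trans (ler_normB _ _) _.
by apply: lerD; apply: le_trans (d_bound _ df _) _; rewrite ler_wpM2l ?(dn_ge0 _ df).
Qed.

Lemma fu_cvg f (df : dual_set f) : cvgn (fun N => f (u N)).
Proof.
have -> : (fun N => f (u N)) = series (fun k => f (labs join (a k))).
  by apply/funext => N; rewrite seriesEord /= /u (d_sum _ df _ (fun k => labs join (a k))).
apply: normed_cvg; apply: nondecreasing_is_cvgn.
  by apply/nondecreasing_seqP => n; rewrite /normed_series_of /= seriesSr lerDl.
exists (dual_norm f * M + dual_norm f * M) => _ [N _ <-].
by rewrite /normed_series_of /= seriesEord /=; exact: fu_bound.
Qed.

Lemma fu_normb f (df : dual_set f) : `|limn (fun N => f (u N))| <= dual_norm f * M.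
Proof.
have h N : `|f (u N)| <= dual_norm f * M.
  by apply: le_trans (d_bound _ df _) _; rewrite ler_wpM2l ?(dn_ge0 _ df).
rewrite ler_norml; apply/andP; split.
  apply: limr_ge; first exact: fu_cvg.
  by apply: nearW => N; have := h N; rewrite ler_norml => /andP[].
apply: limr_le; first exact: fu_cvg.
by apply: nearW => N; have := h N; rewrite ler_norml => /andP[].
Qed.

Lemma part2_main : frame_psum xs fs x @ \oo --> x ->
  ocvg (@bidual_set _ X) (bidual_le le)
        (fun n => bidual_emb (frame_psum xs fs x n)) (bidual_emb x).
Proof.
move=> conv.
exists nat, (fun a b => (a <= b)%N), (fun m => fun f => limn (fun N => f (u N)) - f (u m)).
split.
  split; first exact: (inhabits 0%N).
  split; first exact: leqnn.
  split; first by move=> ? ? ?; exact: leq_trans.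
  by move=> p q; exists (maxn p q); rewrite leq_maxl leq_maxr.
split.
  move=> m; split.
    move=> p q f g df dg /=.
    have -> : limn (fun N => p * f (u N) + q * g (u N)) =
        p * limn (fun N => f (u N)) + q * limn (fun N => g (u N)).
      apply: cvg_lim => //; apply: cvgD; apply: cvgMl_tmp; exact: fu_cvg.
    by rewrite mulrBr mulrBr; lra.
  exists (M + M) => f df.
  apply: le_trans (ler_normB _ _) _; rewrite mulrDl; apply: lerD.
    by rewrite mulrC; exact: fu_normb.
  by rewrite mulrC; apply: le_trans (d_bound _ df _) _; rewrite ler_wpM2l ?(dn_ge0 _ df).
split.
  move=> b b' h f df fp /=.
  by rewrite lerD2l lerN2; apply: (d_mono _ df fp); apply: u_mono.
split.
  split.
    split; first by move=> p q f g _ _ /=; rewrite !mulr0 addr0.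
    by exists 0 => f _; rewrite /= normr0 mul0r.
  split.
    move=> _ [m _ <-] f df fp /=; rewrite subr_ge0.
    apply: limr_ge; first exact: fu_cvg.
    by apply: filterS (nbhs_infty_ge m) => N hN; apply: (d_mono _ df fp); apply: u_mono.
  move=> w _ hlb f df fp /=.
  have cz : (fun m => limn (fun N => f (u N)) - f (u m)) @ \oo --> (0:R).
    rewrite -(subrr (limn (fun N => f (u N)))).
    by apply: cvgB; [exact: cvg_cst | exact: fu_cvg].
  apply: (cvgr_to_ge cz).
  by apply: nearW => m; apply: (hlb _ (ex_intro2 _ _ m I erefl)).
move=> b; exists b => n bn; split => f df fp /=.
  rewrite -subr_le0.
  apply: (cvgr_to_le (F := \oo) (f := fun N => f (y n) - f (y N) - (f (u N) - f (u b)))).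
    apply: cvgB; first by apply: cvgB; [exact: cvg_cst | exact: d_cvg].
    by apply: cvgB; [exact: fu_cvg | exact: cvg_cst].
  apply: filterS (nbhs_infty_ge n) => N hN; rewrite subr_le0 -!(d_B _ df).
  apply: (d_mono _ df fp); apply: (L_trans (y_diff hN).1).
  by apply: L_addl; apply: L_opp; apply: u_mono.
rewrite -subr_le0.
apply: (cvgr_to_le (F := \oo) (f := fun N => f (y N) - f (y n) - (f (u N) - f (u b)))).
  apply: cvgB; first by rewrite opprB; apply: cvgB; [exact: d_cvg | exact: cvg_cst].
  by apply: cvgB; [exact: fu_cvg | exact: cvg_cst].
apply: filterS (nbhs_infty_ge n) => N hN; rewrite subr_le0 -!(d_B _ df).
apply: (d_mono _ df fp); apply: (L_trans (y_diff hN).2).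
by apply: L_addl; apply: L_opp; apply: u_mono.
Qed.
End Frame.
End Lat.

Theorem proposition3p17 :
  (forall (R : realType) (X : completeNormedModType R)
      (le : X -> X -> Prop) (join : X -> X -> X)
      (E : set X) (xs : nat -> X) (fs : nat -> X -> R),
    is_banach_lattice le join -> sigma_monotonically_complete le ->
    closed_subspace E -> is_absolute_frame join E xs fs ->
    forall x, E x -> ocvg setT le (frame_psum xs fs x) x)
  /\
  (forall (R : realType) (X : completeNormedModType R)
      (le : X -> X -> Prop) (join : X -> X -> X)
      (E : set X) (xs : nat -> X) (fs : nat -> X -> R),
    is_banach_lattice le join ->
    closed_subspace E -> is_absolute_frame join E xs fs ->
    forall x, E x ->
      ocvg (@bidual_set _ X) (bidual_le le)
        (fun n => bidual_emb (frame_psum xs fs x n)) (bidual_emb x)).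
Proof.
split.
  move=> R X le join E xs fs HB Hsmc _ [[_ [_ Hc]] Habs] x Ex.
  exact: (@part1_main _ _ _ _ HB xs fs x Hsmc (Hc x Ex) (Habs x Ex)).
move=> R X le join E xs fs HB _ [[_ [_ Hc]] Habs] x Ex.
have [M HM] := Habs x Ex.
exact: (@part2_main _ _ _ _ HB xs fs x M HM (Hc x Ex)).
Qed.
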